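(* Let $\alpha > -1$ and $k \geq 1$, and let $M_k^{\alpha} \in \mathbb{R}^{k\times k}$ be the Hankel matrix with entries $(M_k^{\alpha})_{ij} = \Gamma(i+j+\alpha-1)$, $1 \leq i,j \leq k$ (i.e. the moment matrix of $\gamma_m = \int_0^\infty x^{m+\alpha}e^{-x}dx = \Gamma(m+\alpha+1)$). Then its Cholesky decomposition is $M_k^{\alpha} = (R_k^{\alpha})^T R_k^{\alpha}$, where $R_k^{\alpha}$ is the upper triangular matrix with entries $$R^{\alpha}_{ij} = \frac{(j-1)!}{(j-i)!}\,\frac{\Gamma(\alpha+j)}{\sqrt{\Gamma(i)\,\Gamma(\alpha+i)}}, \qquad 1 \leq i \leq j \leq k,$$ and $R^{\alpha}_{ij}=0$ for $i>j$.
   Context: $\Gamma$ denotes the Gamma function. *)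

(* Defs.v *)
From HB Require Import structures.
From mathcomp Require Import all_boot all_order all_algebra.
From mathcomp Require Import all_classical all_reals all_analysis.
Set Implicit Arguments. Unset Strict Implicit. Unset Printing Implicit Defensive.
Import Order.TTheory GRing.Theory Num.Theory.
Import numFieldNormedType.Exports.
Local Open Scope classical_set_scope.
Local Open Scope ring_scope.

(* Euler Gamma function, Gamma(s) = \int_0^oo x^(s-1) e^(-x) dx
   (Lebesgue integral over ]0,+oo[); meaningful for s > 0, which is the
   only range used below. *)
Definition Gamma (R : realType) (s : R) : R :=
  Rintegral (@lebesgue_measure R) `]0, +oo[%classic
    (fun x => powR x (s - 1) * expR (- x)).

(* Hankel moment matrix, 0-based indices: entry (i,j) is
   Gamma((i+1)+(j+1)+alpha-1) = Gamma(i+j+alpha+1). *)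
Definition Mmat (R : realType) (alpha : R) (k : nat) : 'M[R]_k :=
  \matrix_(i < k, j < k) Gamma ((i + j)%:R + alpha + 1).

(* Upper-triangular Cholesky factor, 0-based indices (paper's i = i0+1,
   j = j0+1): for i <= j,
   (j0)!/(j0-i0)! * Gamma(alpha+j0+1) / sqrt(Gamma(i0+1) Gamma(alpha+i0+1)),
   and 0 for i > j. *)
Definition Rmat (R : realType) (alpha : R) (k : nat) : 'M[R]_k :=
  \matrix_(i < k, j < k)
    if (i <= j)%N then
      ((j`!)%:R / ((j - i)`!)%:R) *
      (Gamma (alpha + j%:R + 1) /
         Num.sqrt (Gamma (i%:R + 1) * Gamma (alpha + i%:R + 1)))
    else 0.

(* Main.v *)
Require Import Defs.
From HB Require Import structures.
From mathcomp Require Import all_boot all_order all_algebra.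
From mathcomp Require Import all_classical all_reals all_analysis.
From mathcomp Require Import ring lra zify.
From mathcomp Require Import measurable_realfun.
Import Order.TTheory GRing.Theory Num.Theory.
Import numFieldNormedType.Exports.

Module Helpers.
Set Implicit Arguments. Unset Strict Implicit. Unset Printing Implicit Defensive.

Section G.
Local Open Scope classical_set_scope.
Local Open Scope ring_scope.
Context {R : realType}.
Notation mu := (@lebesgue_measure R).

Lemma powR_cont (s x : R) : 0 < x -> {for x, continuous (fun y => powR y s)}.
Proof.
move=> x0; apply/differentiable_continuous/derivable1_diffP.
by apply: derivable_powR; rewrite in_itv/= andbT.
Qed.

Lemma expN_cont (x : R) : {for x, continuous (fun y => expR (- y))}.
Proof.
apply: continuous_comp; first exact: continuousN.
exact: continuous_expR.
Qed.

Lemma within_pos (f : R -> R) (a b : R) : 0 < a ->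
  (forall x, 0 < x -> {for x, continuous f}) -> {within `[a, b], continuous f}.
Proof.
move=> a0 cf; apply: continuous_in_subspaceT => x.
rewrite inE/= in_itv/= => /andP[ax _]; apply: cf; exact: lt_le_trans ax.
Qed.

Lemma LRcont (f : R -> R) (a b : R) : 0 < a -> a < b ->
  (forall x, 0 < x -> {for x, continuous f}) ->
  (forall x, 0 < x -> derivable f x 1) -> derivable_oo_LRcontinuous f a b.
Proof.
move=> a0 ab cf df; split.
- move=> x; rewrite in_itv/= => /andP[ax _]; apply: df; exact: lt_trans ax.
- apply: cvg_at_right_filter; exact: cf.
- by apply: cvg_at_left_filter; apply: cf; exact: lt_trans a0 ab.
Qed.

Lemma gcont (s x : R) : 0 < x -> {for x, continuous (fun y => powR y s * expR (- y))}.
Proof. move=> x0; apply: continuousM; [exact: powR_cont|exact: expN_cont]. Qed.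

Lemma gint (s a b : R) : 0 < a ->
  mu.-integrable `[a, b] (EFin \o (fun y => powR y s * expR (- y))).
Proof.
move=> a0; apply: continuous_compact_integrable; first exact: segment_compact.
by apply: within_pos => // x x0; exact: gcont.
Qed.

Lemma ibp (s a b : R) : 0 < s -> 0 < a -> a < b ->
  \int[mu]_(x in `[a, b]) (powR x s * expR (- x)) =
  powR a s * expR (- a) - powR b s * expR (- b) +
  s * \int[mu]_(x in `[a, b]) (powR x (s - 1) * expR (- x)).
Proof.
move=> s0 a0 ab.
rewrite (@Rintegration_by_parts R (fun y => powR y s) (fun y => - expR (- y))
  (fun y => s * powR y (s - 1)) (fun y => expR (- y)) a b ab).
- have -> : \int[mu]_(x in `[a, b]) (s * x `^ (s - 1) * - expR (- x)) =
     \int[mu]_(x in `[a, b]) ((- s) * (powR x (s - 1) * expR (- x))).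
    by apply: eq_Rintegral => x _; rewrite mulrN mulNr mulrA.
  rewrite RintegralZl //; last exact: gint.
  rewrite !mulrN mulNr opprK; lra.
- by apply: within_pos => // x x0; apply: continuousM; [exact: cvg_cst|exact: powR_cont].
- apply: LRcont => // x x0; [exact: powR_cont|].
  by apply: derivable_powR; rewrite in_itv/= andbT.
- move=> x; rewrite in_itv/= => /andP[ax _].
  by rewrite powR_derive1// in_itv/= andbT (lt_trans a0 ax).
- by apply: within_pos => // x x0; exact: expN_cont.
- apply: LRcont => // x x0.
    by apply: continuousN; exact: expN_cont.
move=> x _; by rewrite derive1E derive_val mulrN1 opprK.
Qed.
End G.

Section G2.
Local Open Scope classical_set_scope.
Local Open Scope ring_scope.
Context {R : realType}.
Notation mu := (@lebesgue_measure R).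

Definition hh (t x : R) := powR x t * expR (- x).
Definition An (n : nat) : set R := `[(n.+2%:R)^-1, n.+2%:R].
Definition EE (t : R) := (\int[mu]_(x in `]0%R, +oo[) (hh t x)%:E)%E.

Lemma An_nd : nondecreasing_seq An.
Proof.
move=> n m nm; rewrite subsetEset => x; rewrite /An /= !in_itv/= => /andP[h1 h2].
apply/andP; split.
  apply: le_trans h1; rewrite lef_pV2 ?posrE ?ltr0n// ler_nat; lia.
by apply: (le_trans h2); rewrite ler_nat; lia.
Qed.

Lemma An_pos n x : An n x -> 0 < x.
Proof.
rewrite /An /= in_itv/= => /andP[h1 _]; apply: lt_le_trans h1.
by rewrite invr_gt0 ltr0n.
Qed.

Lemma bigcup_An : \bigcup_n An n = `]0, +oo[%classic.
Proof.
apply/seteqP; split => x.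
  by move=> [n _ /An_pos x0]; rewrite /= in_itv/= andbT.
rewrite /= in_itv/= andbT => x0.
have xi0 : 0 < x^-1 by rewrite invr_gt0.
exists (Num.truncn (x + x^-1)) => //.
have h1 := truncnS_gt (x + x^-1).
have h : x + x^-1 < (Num.truncn (x + x^-1)).+2%:R.
  by apply: (lt_le_trans h1); rewrite ler_nat.
rewrite /An /= in_itv/=; apply/andP; split.
  rewrite -[leRHS]invrK lef_pV2 ?posrE ?invr_gt0 ?ltr0n //.
  by apply: ltW; apply: le_lt_trans h; rewrite lerDr ltW.
by apply: ltW; apply: le_lt_trans h; rewrite lerDl ltW.
Qed.

Lemma hh_ge0 t x : 0 <= hh t x.
Proof. by rewrite /hh mulr_ge0 ?powR_ge0 ?expR_ge0. Qed.

Lemma mhh t D : measurable_fun D (hh t).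
Proof.
apply: measurable_funTS; apply: measurable_funM.
  exact: measurable_powR.
apply: measurableT_comp; first exact: measurable_expR.
exact: measurable_funN.
Qed.

Lemma Elim t : (\int[mu]_(x in An n) (hh t x)%:E)%E @[n --> \oo] --> EE t.
Proof.
rewrite /EE -bigcup_An; apply: ge0_nondecreasing_set_cvg_integral.
- exact: An_nd.
- by move=> i; exact: measurable_itv.
- by move=> i; apply/measurable_EFinP; exact: mhh.
- by move=> i x _; rewrite lee_fin hh_ge0.
Qed.

End G2.

Section G3.
Local Open Scope classical_set_scope.
Local Open Scope ring_scope.
Context {R : realType}.
Notation mu := (@lebesgue_measure R).

Definition uu (n : nat) : R := (n.+2%:R)^-1.

Lemma uu_gt0 n : 0 < uu n.
Proof. by rewrite /uu invr_gt0 ltr0n. Qed.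

Lemma uu_cvg : uu n @[n --> \oo] --> 0.
Proof.
have := @cvg_harmonic R; rewrite -cvg_shiftS.
by apply: cvg_trans; apply: near_eq_cvg; near=> n.
Unshelve. all: by end_near. Qed.

Lemma bnd_left (s : R) : 0 < s ->
  (powR (uu n) s * expR (- uu n)) @[n --> \oo] --> 0.
Proof.
move=> s0.
have H : (powR a s * expR (- a)) @[a --> 0^'+] --> 0.
  rewrite -[X in _ --> X](mul0r (expR (- 0))).
  apply: cvgM; first exact: powR_cvg0.
  by apply: cvg_at_right_filter; exact: expN_cont.
move/cvg_at_rightP : H; apply; split; [exact: uu_gt0|exact: uu_cvg].
Qed.


Lemma pow_exp_bound (s b : R) (m : nat) : 1 <= b -> s <= m%:R ->
  powR b s * expR (- b) <= (m.+1`!)%:R / b.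
Proof.
move=> b1 sm.
have b0 : 0 < b by apply: lt_le_trans b1.
have h1 : powR b s <= b ^+ m.
  by rewrite -powR_mulrn ?(ltW b0)//; apply: ler_powR.
have h2 := @expR_ge1Dxn R b m (ltW b0).
have e0 := expR_gt0 b.
have f0 : 0 < (m.+1`!)%:R :> R by rewrite ltr0n fact_gt0.
rewrite expRN.
apply: (le_trans (ler_wpM2r _ h1)); first by rewrite invr_ge0 ltW.
rewrite ler_pdivlMr // mulrC mulrA ler_pdivrMr //.
rewrite -exprS.
have : b ^+ m.+1 / (m.+1`!)%:R <= expR b by apply: le_trans h2; rewrite lerDr.
by rewrite ler_pdivrMr // mulrC.
Qed.

Lemma bnd_right (s : R) :
  (powR (n.+2%:R) s * expR (- n.+2%:R)) @[n --> \oo] --> (0 : R).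
Proof.
pose m := Num.truncn `|s|.
have sm : s <= m.+1%:R.
  apply: le_trans (ler_norm s) _; apply: ltW; exact: truncnS_gt.
apply: (@squeeze_cvgr _ _ _ _ (fun=> 0) (fun n => (m.+2`!)%:R * uu n)).
- near=> n; apply/andP; split.
    by rewrite mulr_ge0 ?powR_ge0 ?expR_ge0.
  by apply: pow_exp_bound => //; rewrite (ler_nat _ 1).
- exact: cvg_cst.
- rewrite -[X in _ --> X](mulr0 (m.+2`!)%:R).
  apply: cvgM; [exact: cvg_cst|exact: uu_cvg].
Unshelve. all: by end_near. Qed.


Lemma int_An t n : (\int[mu]_(x in An n) (hh t x)%:E)%E = (\int[mu]_(x in An n) hh t x)%:E.
Proof.
rewrite /Rintegral fineK //; apply: integrable_fin_num => //.
  exact: measurable_itv.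
exact: (gint t _ (uu_gt0 n)).
Qed.

Lemma uu_lt n : uu n < n.+2%:R.
Proof.
apply: (@lt_trans _ _ 1).
  by rewrite /uu invf_lt1 ?ltr0n // ltr1n.
by rewrite ltr1n.
Qed.

Lemma EE_rec (s : R) : 0 < s -> EE s = (s%:E * EE (s - 1))%E.
Proof.
move=> s0.
have L1 := Elim (t := s).
have L2 := Elim (t := s - 1).
pose w n := powR (uu n) s * expR (- uu n) - powR (n.+2%:R) s * expR (- n.+2%:R).
have eq n : (\int[mu]_(x in An n) (hh s x)%:E)%E =
    ((w n)%:E + s%:E * \int[mu]_(x in An n) (hh (s - 1) x)%:E)%E.
  rewrite !int_An -EFinM -EFinD; congr EFin.
  exact: (ibp s0 (uu_gt0 n) (uu_lt n)).
have hw : w n @[n --> \oo] --> (0 : R).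
  rewrite -[X in _ --> X](subr0 0).
  apply: cvgB; [exact: bnd_left|exact: bnd_right].
have hwE : ((w n)%:E)%E @[n --> \oo] --> (0 : \bar R)%E.
  by apply: cvg_EFin; [exact: nearW|exact: hw].
have L3 : ((w n)%:E + s%:E * \int[mu]_(x in An n) (hh (s - 1) x)%:E)%E @[n --> \oo]
    --> (0 + s%:E * EE (s - 1))%E.
  apply: cvgeD => //.
  by apply: cvgeZl.
have L4 : ((w n)%:E + s%:E * \int[mu]_(x in An n) (hh (s - 1) x)%:E)%E @[n --> \oo]
    --> EE s.
  by rewrite (_ : (fun n => _) = (fun n => (\int[mu]_(x in An n) (hh s x)%:E)%E)) //; apply: funext => n; rewrite eq.
rewrite -[RHS]add0e.
exact: (cvg_unique _ L4 L3).
Qed.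

End G3.

Section G4.
Local Open Scope classical_set_scope.
Local Open Scope ring_scope.
Context {R : realType}.
Notation mu := (@lebesgue_measure R).

Lemma EE0 : EE 0 = 1%E :> \bar R.
Proof.
rewrite /EE /hh.
under eq_integral do rewrite powRr0 mul1r.
rewrite integral_itv_obnd_cbnd; last first.
  by apply/measurable_EFinP; apply: measurable_funTS; apply: measurableT_comp;
    [exact: measurable_expR|exact: measurable_funN].
rewrite (@ge0_continuous_FTC2y R (fun x => expR (- x)) (fun x => - expR (- x)) 0 0).
- by rewrite oppr0 expR0 -EFinB sub0r opprK.
- by move=> x _; exact: expR_ge0.
- by apply: continuous_subspaceT => x; exact: expN_cont.
- rewrite -oppr0; apply: cvgN; exact: cvgr_expR.
- by move=> x _.
- by apply: cvg_at_right_filter; have := continuousN (expN_cont (x:=0)); exact.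
- by move=> x _; rewrite derive1E derive_val mulrN1 opprK.
Qed.


Lemma EE_ge0 (t : R) : (0 <= EE t)%E.
Proof. by apply: integral_ge0 => x _; rewrite lee_fin hh_ge0. Qed.

Lemma EE_nat n : EE n%:R = ((n`!)%:R)%:E :> \bar R.
Proof.
elim: n => [|n IH]; first by rewrite EE0.
rewrite EE_rec ?ltr0n // -natr1 addrK IH -EFinM; congr EFin.
by rewrite factS natrM natr1.
Qed.

Lemma powR_split (x s : R) (n : nat) : 0 < x -> n%:R <= s -> s <= n.+1%:R ->
  powR x s <= powR x n%:R + powR x n.+1%:R.
Proof.
move=> x0 ns sn.
have [x1|x1] := leP x 1.
  rewrite -[powR x s]addr0; apply: lerD; last exact: powR_ge0.
  by apply: ger_powR => //; rewrite x0.
rewrite -[powR x s]add0r; apply: lerD; first exact: powR_ge0.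
by apply: ler_powR => //; rewrite ltW.
Qed.

Lemma EE_fin (t : R) : -1 < t -> EE t \is a fin_num.
Proof.
move=> t1.
have s0 : 0 < t + 1 by lra.
pose n := Num.truncn (t + 1).
have /andP[ns sn] := truncn_itv (ltW s0).
have hle : (EE (t + 1) <= EE n%:R + EE n.+1%:R)%E.
  rewrite /EE -ge0_integralD //; last 4 first.
  - by move=> x _; rewrite lee_fin hh_ge0.
  - by apply/measurable_EFinP; exact: mhh.
  - by move=> x _; rewrite lee_fin hh_ge0.
  - by apply/measurable_EFinP; exact: mhh.
  apply: ge0_le_integral => //.
  - by move=> x _; rewrite lee_fin hh_ge0.
  - by apply/measurable_EFinP; exact: mhh.
  - by apply: emeasurable_funD; apply/measurable_EFinP; exact: mhh.
  move=> x; rewrite /= in_itv/= andbT => x0.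
  rewrite -EFinD lee_fin /hh -mulrDl; apply: ler_wpM2r; first exact: expR_ge0.
  by apply: powR_split => //; apply: ltW.
have fs : EE (t + 1) \is a fin_num.
  rewrite ge0_fin_numE ?EE_ge0 //; apply: (le_lt_trans hle).
  by rewrite !EE_nat -EFinD ltry.
have := EE_rec s0; rewrite addrK => h.
rewrite ge0_fin_numE ?EE_ge0 //; rewrite ltNge leye_eq; apply/negP => /eqP hy.
by move: fs; rewrite h hy gt0_muley ?lte_fin.
Qed.


Lemma EE_gt0 (t : R) : -1 < t -> (0 < EE t)%E.
Proof.
move=> t1.
pose c : R := expR (- 2) / 2.
have c0 : 0 < c by rewrite /c divr_gt0 ?expR_gt0.
apply: (@lt_le_trans _ _ (\int[mu]_(x in `[1%R, 2%R]) (cst c%:E) x)%E).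
  have -> : (\int[mu]_(x in `[1%R, 2%R]) (cst c%:E) x = c%:E * mu `[1%R, 2%R])%E.
    by rewrite integral_cst //; exact: measurable_itv.
  rewrite lebesgue_measure_itv /= ifT; last by rewrite lte_fin ltr1n.
  by rewrite -EFinB -EFinM lte_fin mulr_gt0 // subr_gt0 ltr1n.
apply: (@le_trans _ _ (\int[mu]_(x in `[1%R, 2%R]) (hh t x)%:E)%E).
  apply: ge0_le_integral => //.
  - by move=> x _; rewrite lee_fin ltW.
  - by apply/measurable_EFinP; exact: mhh.
  move=> x; rewrite /= in_itv/= => /andP[x1 x2].
  have x0 : 0 < x by apply: lt_le_trans x1.
  rewrite lee_fin /hh /c mulrC; apply: ler_pM.
  - by rewrite invr_ge0.
  - exact: expR_ge0.
  - apply: (@le_trans _ _ (powR x (-1))).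
      by rewrite powR_inv1 ?(ltW x0) // lef_pV2 ?posrE.
    by apply: ler_powR => //; apply: ltW.
  by rewrite ler_expR lerN2.
apply: ge0_subset_integral => //.
- by apply/measurable_EFinP; exact: mhh.
- by move=> x _; rewrite lee_fin hh_ge0.
move=> x; rewrite /= !in_itv/= andbT => /andP[x1 _].
by apply: lt_le_trans x1.
Qed.

Definition GG (s : R) := fine (EE (s - 1)).

Lemma GG_gt0 (s : R) : 0 < s -> 0 < GG s.
Proof.
move=> s0; have h1 : -1 < s - 1 by lra.
have := EE_gt0 h1; have := EE_fin h1; rewrite /GG.
by case: (EE (s - 1)).
Qed.

Lemma GG_rec (s : R) : 0 < s -> GG (s + 1) = s * GG s.
Proof.
move=> s0; rewrite /GG addrK EE_rec //.
have h : -1 < s - 1 by lra.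
move: (EE_fin h); case: (EE (s - 1)) => // r _.

Qed.

Lemma GG1 : GG 1 = 1.
Proof. by rewrite /GG subrr EE0. Qed.

End G4.

Section A.
Local Open Scope classical_set_scope.
Local Open Scope ring_scope.
Variable R : realFieldType.

Definition rf (b : R) (n : nat) : R := \prod_(t < n) (b + t%:R).
Definition ff (j l : nat) : R := (j ^_ l)%:R.

Lemma rf0 b : rf b 0 = 1.
Proof. by rewrite /rf big_ord0. Qed.

Lemma rfS b n : rf b n.+1 = b * rf (b + 1) n.
Proof.
rewrite /rf big_ord_recl /= addr0; congr (_ * _).
by apply: eq_bigr => t _; rewrite /bump /= -addn1 natrD; ring.
Qed.

Lemma ff0 j : ff j 0 = 1.
Proof. by rewrite /ff ffactn0. Qed.

Lemma ffS j m : ff j m.+1 = ff j m * (j%:R - m%:R).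
Proof.
rewrite /ff ffactnSr natrM.
have [mj|jm] := leqP m j; first by rewrite natrB.
by rewrite ffact_small // (mulr0n 1) !mul0r.
Qed.

Lemma ident (j i : nat) : forall (a : R) (N : nat), (i < N)%N ->
  \sum_(l < N) ('C(i, l))%:R * ff j l * rf (a + l%:R) (i - l) = rf (a + j%:R) i.
Proof.
elim: i => [|i IH] a N iN.
  case: N iN => [//|N] _.
  rewrite big_ord_recl big1 /=; last by move=> l _; rewrite bin0n !mul0r.
  by rewrite /rf !big_ord0 ff0 addr0 !mulr1.
case: N iN => [//|N] iN.
have iN' : (i < N)%N by [].
rewrite big_ord_recl /= bin0 ff0 addr0 subn0 mul1r mul1r.
under eq_bigr => m _ do rewrite /bump /= add1n binS natrD mulrDl mulrDl subSS.
rewrite big_split /=.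
have sh : forall (b : R) (m : nat), b + m.+1%:R = b + 1 + m%:R.
  by move=> b m; rewrite -addn1 natrD; ring.
have H2 : rf (a + j%:R) i.+1 =
   \sum_(m < N) ('C(i, m))%:R * ff j m * (a + m%:R) * rf (a + 1 + m%:R) (i - m) +
   \sum_(m < N) ('C(i, m))%:R * ff j m.+1 * rf (a + 1 + m%:R) (i - m).
  rewrite rfS [a + j%:R + 1]addrAC -(IH (a + 1) N iN') big_distrr -big_split /=.
  by apply: eq_bigr => m _; rewrite ffS; ring.
rewrite H2 addrA; congr (_ + _); last first.
  by apply: eq_bigr => m _; rewrite sh.
case: N iN iN' H2 => [//|N] iN iN' _.
rewrite [RHS]big_ord_recl /= bin0 !addr0 subn0 ff0 mul1r mul1r -rfS.
congr (_ + _).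
rewrite [LHS]big_ord_recr /= bin_small ?mul0r ?mul0r ?addr0 //.
apply: eq_bigr => m _; rewrite /bump /= add1n.
have [mi|im] := ltnP m i; last first.
  by rewrite bin_small ?mul0r // ltnS.
rewrite sh.
have -> : (i - m = (i - m.+1).+1)%N by lia.
rewrite rfS !mulrA; congr (_ * rf _ _).
rewrite sh; ring.
Qed.

End A.

Section A2.
Local Open Scope classical_set_scope.
Local Open Scope ring_scope.
Local Open Scope ring_scope.
Variable R : rcfType.
Variable G : R -> R.
Hypothesis Gpos : forall x, 0 < x -> 0 < G x.
Hypothesis Grec : forall x, 0 < x -> G (x + 1) = x * G x.
Hypothesis G1 : G 1 = 1.

Lemma Gshift (b : R) (n : nat) : 0 < b -> G (b + n%:R) = rf b n * G b.
Proof.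
move=> b0; elim: n => [|n IH]; first by rewrite addr0 rf0 mul1r.
have -> : b + n.+1%:R = (b + n%:R) + 1 by rewrite -addn1 natrD addrA.
rewrite Grec; last by apply: (lt_le_trans b0); rewrite lerDl.
by rewrite IH /rf big_ord_recr /=; ring.
Qed.

Lemma Gnat (n : nat) : G (n%:R + 1) = (n`!)%:R.
Proof.
elim: n => [|n IH]; first by rewrite add0r G1.
rewrite -addn1 natrD Grec ?IH; last by rewrite ltr_pwDr // ltr01.
by rewrite addn1 factS natrM natr1.
Qed.

Lemma term (alpha : R) (ha : -1 < alpha) (l i j : nat) :
  ((if (l <= i)%N then ((i`!)%:R / ((i - l)`!)%:R) *
      (G (alpha + i%:R + 1) / Num.sqrt (G (l%:R + 1) * G (alpha + l%:R + 1))) else 0) *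
  (if (l <= j)%N then ((j`!)%:R / ((j - l)`!)%:R) *
      (G (alpha + j%:R + 1) / Num.sqrt (G (l%:R + 1) * G (alpha + l%:R + 1))) else 0))
  = ('C(i, l))%:R * ff R j l * rf (alpha + 1 + l%:R) (i - l) * G (alpha + 1 + j%:R).
Proof.
have [li|il] := leqP l i; last by rewrite bin_small // !mul0r.
have [lj|jl] := leqP l j; last by rewrite /ff ffact_small // !(mulr0, mul0r, mulr0n).
have a0 : 0 < alpha + l%:R + 1.
  by have := ler0n R l; lra.
set P := G (l%:R + 1) * G (alpha + l%:R + 1).
have l1 : 0 < l%:R + 1 :> R by have := ler0n R l; lra.
have P0 : 0 < P by rewrite /P mulr_gt0 // Gpos.
have sP : Num.sqrt P ^+ 2 = P by rewrite sqr_sqrtr // ltW.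
have key : forall x y : R, (x / Num.sqrt P) * (y / Num.sqrt P) = x * y / P.
  by move=> x y; rewrite mulrACA -invfM -expr2 sP.
rewrite [X in X * _]mulrA [X in _ * X]mulrA key /P Gnat.
have -> : alpha + i%:R + 1 = (alpha + l%:R + 1) + (i - l)%:R.
  by rewrite natrB //; ring.
rewrite Gshift //.
have -> : alpha + 1 + l%:R = alpha + l%:R + 1 by ring.
have -> : alpha + 1 + j%:R = alpha + j%:R + 1 by ring.
have hi := bin_fact li; have hj := ffact_fact lj.
rewrite -hi -hj /ff !natrM.
have f1 : ((i - l)`!)%:R != 0 :> R by rewrite pnatr_eq0 -lt0n fact_gt0.
have f2 : ((j - l)`!)%:R != 0 :> R by rewrite pnatr_eq0 -lt0n fact_gt0.
have f3 : (l`!)%:R != 0 :> R by rewrite pnatr_eq0 -lt0n fact_gt0.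
have f4 : G (alpha + l%:R + 1) != 0 by rewrite gt_eqF // Gpos.
by field; rewrite f1 f2 f3 f4.
Qed.

End A2.

End Helpers.
Import Helpers.

Local Open Scope ring_scope.

Theorem proposition5 (R : realType) (alpha : R) (k : nat)
    (halpha : -1 < alpha) (hk : (1 <= k)%N) :
  Mmat alpha k = (Rmat alpha k)^T *m Rmat alpha k /\
  (forall i j : 'I_k, (j < i)%N -> Rmat alpha k i j = 0) /\
  (forall i : 'I_k, 0 < Rmat alpha k i i).
Proof.
have GE : forall s : R, Gamma s = GG s by [].
have Gpos : forall x : R, 0 < x -> 0 < Gamma x by move=> x; rewrite GE; exact: GG_gt0.
have Grec : forall x : R, 0 < x -> Gamma (x + 1) = x * Gamma x.
  by move=> x; rewrite !GE; exact: GG_rec.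
have G1 : Gamma (1 : R) = 1 by rewrite GE GG1.
split; [|split].
- apply/matrixP => i j; rewrite !mxE.
  under eq_bigr do rewrite !mxE.
  under eq_bigr => l _ do rewrite (term Gpos Grec G1 halpha).
  rewrite -big_distrl /= ident; last exact: ltn_ord.
  rewrite -(Gshift Grec); last first.
    by have := ler0n R j; lra.
  by congr Gamma; rewrite natrD; ring.
- by move=> i j ji; rewrite mxE leqNgt ji.
- move=> i; rewrite mxE leqnn subnn fact0 divr1.
  have i1 : 0 < i%:R + 1 :> R by have := ler0n R i; lra.
  have i2 : 0 < alpha + i%:R + 1 :> R by have := ler0n R i; lra.
  rewrite mulr_gt0 ?ltr0n ?fact_gt0 // divr_gt0 ?Gpos // sqrtr_gt0 mulr_gt0 // Gpos //.
Qed.
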